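(* Let $m\geq 2$ and $G=T^+_{m,2}$ with root $r$ and stem $r'$. If $S$ is a Type II set for $G$, then $N_G[r]\setminus\mathcal{P}^\infty(S)=\{r',r\}$.
   Context: Power domination: for a graph $G=(V,E)$ and $S\subseteq V$, $\mathcal{P}^0(S)=N[S]$ and for $k\ge1$, $\mathcal{P}^k(S)=\mathcal{P}^{k-1}(S)\cup N^*(\mathcal{P}^{k-1}(S))$, where $x\in N^*(A)$ iff some $a\in A$ has $x$ as its only neighbor not in $A$; $\mathcal{P}^\infty(S)$ is the stable value (the set of observed vertices), and $S$ is a power dominating set if $\mathcal{P}^\infty(S)=V$. $T_{m,h}$ is the complete $m$-ary tree of height $h$ rooted at $r$; $T^+_{m,h}$ is $T_{m,h}$ plus a new vertex $r'$ (stem) joined to $r$. For $G=T^+_{m,h}$, a set $S\subseteq V(G)\setminus\{r'\}$ is Type I if it is a power dominating set for $G$; Type II if it is not but $S\cup\{r'\}$ is; Type 0 otherwise. *)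

(* Defs.v *)
From mathcomp Require Import all_boot.
Set Implicit Arguments. Unset Strict Implicit. Unset Printing Implicit Defensive.

Section PowerDomination.
Variables (T : finType) (e : rel T).

Definition cnbhd (S : {set T}) : {set T} :=
  [set x | (x \in S) || [exists y in S, e y x]].

Definition nstar (A : {set T}) : {set T} :=
  [set x | [exists a in A, [set y | e a y && (y \notin A)] == [set x]]].

Fixpoint Pk (S : {set T}) (k : nat) : {set T} :=
  match k with
  | 0 => cnbhd S
  | k'.+1 => Pk S k' :|: nstar (Pk S k')
  end.

(* x belongs to P^infty(S) (the stable value = union of the increasing chain) *)
Definition observed (S : {set T}) (x : T) : Prop := exists k, x \in Pk S k.

Definition power_dominating (S : {set T}) : Prop := forall x, observed S x.
End PowerDomination.

(* T^+_{m,2}: vertices are the stem r', the root r, the children c_i (i < m)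
   and the grandchildren g_(i,j) (child j of c_i). *)
Definition Tp2 (m : nat) : finType := (unit + unit + 'I_m + ('I_m * 'I_m))%type.

Definition tstem {m} : Tp2 m := inl (inl (inl tt)).
Definition troot {m} : Tp2 m := inl (inl (inr tt)).
Definition child {m} (i : 'I_m) : Tp2 m := inl (inr i).
Definition gchild {m} (i j : 'I_m) : Tp2 m := inr (i, j).

(* parent relation: parent u v means u is the parent of v (stem r' is attached to r) *)
Definition parent_rel m (u v : Tp2 m) : bool :=
  match u, v with
  | inl (inl (inr tt)), inl (inl (inl tt)) => true   (* r -- r' *)
  | inl (inl (inr tt)), inl (inr _) => true          (* r -- c_i *)
  | inl (inr i), inr (i', _) => i == i'              (* c_i -- g_(i,j) *)
  | _, _ => false
  end.

Definition Tp2_adj m : rel (Tp2 m) := fun u v => parent_rel u v || parent_rel v u.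

Definition TypeII m (S : {set Tp2 m}) : Prop :=
  tstem \notin S /\ ~ power_dominating (@Tp2_adj m) S
  /\ power_dominating (@Tp2_adj m) (tstem |: S).

(* Main.v *)
Require Import Defs.
From mathcomp Require Import all_boot.
Set Implicit Arguments. Unset Strict Implicit. Unset Printing Implicit Defensive.

Section Gen.
Variables (T : finType) (e : rel T).

Lemma Pk_stab S k : (Pk e S k == Pk e S k.+1) || (k < #|Pk e S k.+1|).
Proof.
elim: k => [|k IH].
  case: eqP => //= ne.
  have pr : Pk e S 0 \proper Pk e S 1.
    by rewrite properEneq; apply/andP; split; [apply/eqP | exact: subsetUl].
  exact: leq_ltn_trans (leq0n _) (proper_card pr).
case/orP: IH => [/eqP E | lt].
  have H : nstar e (Pk e S k.+1) \subset Pk e S k.+1.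
    by rewrite -[in nstar _ _]E; apply: subsetUr.
  by apply/orP; left; apply/eqP; apply/esym/setUidPl.
case: (Pk e S k.+1 =P Pk e S k.+2) => [E|ne]; first by apply/orP; left; apply/eqP.
apply/orP; right; apply: leq_ltn_trans lt _; apply: proper_card.
rewrite properEneq; apply/andP; split; first by apply/eqP.
exact: subsetUl.
Qed.

Lemma fix_n S : nstar e (Pk e S #|T|) \subset Pk e S #|T|.
Proof.
have := Pk_stab S #|T|; case/orP => [/eqP E | lt].
  by rewrite {2}E; exact: subsetUr.
by have := max_card (mem (Pk e S #|T|.+1)); rewrite leqNgt lt.
Qed.

Lemma Pk_le S (U : {set T}) : cnbhd e S \subset U -> nstar e U \subset U ->
  forall k, Pk e S k \subset U.
Proof.
move=> h0 hU; elim=> [|k IH] //=.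
rewrite subUset IH /=; apply/subsetP => x.
rewrite inE => /existsP [a /andP [aP /eqP E]].
apply/negPn/negP => xU.
have xy : x \in [set y | e a y && (y \notin Pk e S k)] by rewrite E set11.
move: xy; rewrite inE => /andP [eax _].
apply: (negP xU); apply: (subsetP hU); rewrite inE; apply/existsP; exists a.
rewrite (subsetP IH _ aP) /=; apply/eqP/setP => y; rewrite !inE.
apply/idP/idP.
  case/andP => eay yU.
  have : y \in [set y | e a y && (y \notin Pk e S k)].
    rewrite inE eay /=; apply: contra yU; exact: (subsetP IH).
  by rewrite E inE.
by move/eqP => ->; rewrite eax xU.
Qed.

Lemma Pk_0 S j : Pk e S 0 \subset Pk e S j.
Proof. elim: j => //= j IH; exact: subset_trans IH (subsetUl _ _). Qed.

Lemma obsE S x : observed e S x <-> x \in Pk e S #|T|.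
Proof.
split; last by exists #|T|.
case=> k Hk; apply: (subsetP (Pk_le (Pk_0 S #|T|) (fix_n S) k)) Hk.
Qed.

Lemma force (X : {set T}) a x : a \in X -> e a x -> x \notin X ->
  (forall y, e a y -> y \notin X -> y = x) -> x \in nstar e X.
Proof.
move=> aX eax xX H; rewrite inE; apply/existsP; exists a; rewrite aX /=.
apply/eqP/setP => y; rewrite !inE; apply/idP/idP.
  by case/andP => ey yX; rewrite (H y ey yX).
by move/eqP => ->; rewrite eax xX.
Qed.

End Gen.

Section Tree.
Variable m : nat.
Local Notation e := (@Tp2_adj m).

Lemma cnbhd_stem (S : {set Tp2 m}) x : x \in cnbhd e (tstem |: S) ->
  [\/ x \in cnbhd e S, x = tstem | x = troot].
Proof.
rewrite !inE => /orP [/orP [/eqP -> | xS] | /existsP [y /andP [yS eyx]]].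
- by constructor 2.
- by constructor 1; rewrite xS.
move: yS; rewrite !inE => /orP [/eqP ey | yS].
  subst y; move: eyx; case: x => [[[[]|[]]|i]|[i j]] //= _; by constructor 3.
constructor 1; apply/orP; right; apply/existsP; exists y; by rewrite yS.
Qed.

Definition U0 (C : {set Tp2 m}) : {set Tp2 m} :=
  [set x : Tp2 m | if x is inr (i, _) then child i \in C else true].

Lemma keyL (S : {set Tp2 m}) (k : 'I_m) : 1 < m ->
  child k \notin Pk e S #|Tp2 m| -> ~ power_dominating e (tstem |: S).
Proof.
move=> m2 ck PD.
set C := Pk e S #|Tp2 m|.
have Cfix := fix_n e S.
have Hle : forall k', Pk e (tstem |: S) k' \subset U0 C.
  apply: Pk_le.
    apply/subsetP => x /cnbhd_stem [xS | -> | ->]; rewrite inE //.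
    case: x xS => [//|[i j]] xS.
    have xC : gchild i j \in C by apply: (subsetP (Pk_0 e S #|Tp2 m|)).
    apply/negPn/negP => ciC.
    apply: (negP ciC); apply: (subsetP Cfix); apply: (force xC) => //=.
      by rewrite /Tp2_adj /= eqxx.
    by move=> y; case: y => [[[[]|[]]|i']|[i' j']] //=; rewrite /Tp2_adj /= ?orbF => /eqP -> .
  apply/subsetP => x; rewrite inE => /existsP [a /andP [aU /eqP E]].
  apply/negPn/negP => xU.
  have : x \in [set y | e a y && (y \notin U0 C)] by rewrite E set11.
  rewrite inE => /andP [eax _].
  case: x xU E eax => [x|[i j]]; first by rewrite inE.
  rewrite inE /= => ciC E.
  case: a aU E => [[[[]|[]]|i']|[i' j']] //= _ E; rewrite /Tp2_adj /= ?orbF => /eqP ii; subst i'.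
  have : exists j' : 'I_m, j' != j.
    pose o0 : 'I_m := Ordinal (ltn_trans (ltn0Sn 0) m2).
    case: (j =P o0) => [ej|nej]; last by exists o0; apply/eqP => eq0; apply: nej.
    by exists (Ordinal m2); rewrite ej.
  case=> j' nj.
  have : gchild i j' \in [set y | e (child i) y && (y \notin U0 C)].
    by rewrite inE /Tp2_adj /= eqxx inE /= ciC.
  by rewrite E inE => /eqP [] /eqP; rewrite (negbTE nj).
case: (PD (gchild k k)) => k' Hk.
by have := subsetP (Hle k') _ Hk; rewrite inE /= (negbTE ck).
Qed.

End Tree.

Theorem mainTheorem7 (m : nat) (S : {set Tp2 m}) :
  2 <= m -> TypeII S ->
  forall x : Tp2 m,
    (x \in cnbhd (@Tp2_adj m) [set troot] /\ ~ observed (@Tp2_adj m) S x)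
    <-> (x = tstem \/ x = troot).
Proof.
move=> m2 [sS [nPD PD]].
set C := Pk (@Tp2_adj m) S #|Tp2 m|.
have Cfix := fix_n (@Tp2_adj m) S.
have hC : forall i, child i \in C.
  move=> i; apply/negPn/negP => ci; exact: (keyL m2 ci PD).
have hr : troot \notin C.
  apply/negP => rC.
  have sC : tstem \in C.
    apply/negPn/negP => sC; apply: (negP sC); apply: (subsetP Cfix).
    apply: (force rC) => //.
    by move=> y; case: y => [[[[]|[]]|i']|[i' j']] //= _; rewrite hC.
  apply: nPD => x; case: (PD x) => k Hk; apply/obsE.
  apply: (subsetP (Pk_le _ Cfix k)) Hk.
  apply/subsetP => y /cnbhd_stem [yS | -> | ->] //.
  exact: (subsetP (Pk_0 _ S _)).
have hs : tstem \notin C.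
  apply/negP => sC; apply: (negP hr); apply: (subsetP Cfix).
  apply: (force sC) => //.
  by move=> y; case: y => [[[[]|[]]|i']|[i' j']].
move=> x; split.
  case; rewrite !inE => /orP [/eqP ->|]; first by right.
  case/existsP => y /andP [/set1P -> ].
  case: x => [[[[]|[]]|i]|[i j]] //= _; first by left.
  by case; apply/obsE; rewrite hC.
case=> ->; (split; [rewrite !inE; try by rewrite eqxx|by move/obsE; apply/negP]).
apply/orP; right; apply/existsP; exists troot; by rewrite set11.
Qed.
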